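(* Let $G$ be a graph with demand functions $f$ and $g$ and fractional list-assignment $L$ such that for each $v\in V(G)$, $g(v) \leq f(v)\mu(L(v))$. If for each $S\subseteq V(G)$ with $\mu(\bigcap_{v\in S}L(v)) > 0$ the graph $G[S]$ has an $f$-coloring (with respect to $f$ restricted to $S$), then $G$ has a fractional $(g, L)$-coloring.
   Context: A demand function for a graph $G$ is a function $f: V(G)\to [0,1]\cap\mathbb{Q}$. A fractional coloring of $G$ is a function $\phi$ assigning to each $v\in V(G)$ a measurable subset $\phi(v)\subseteq[0,1]$ such that $\phi(u)\cap\phi(v)=\varnothing$ for every edge $uv$; an $f$-coloring is a fractional coloring with $\mu(\phi(v))\geq f(v)$ for all $v$, $\mu$ being Lebesgue measure. A fractional list-assignment is a function $L$ assigning to each vertex a measurable subset $L(v)\subseteq[0,1]$. A fractional $(g,L)$-coloring is a $g$-coloring $\phi$ with $\phi(v)\subseteq L(v)$ for all $v$. *)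

(* Defs.v *)
From mathcomp Require Import all_boot all_order all_algebra.
From mathcomp Require Import all_classical all_reals all_analysis.
Set Implicit Arguments. Unset Strict Implicit. Unset Printing Implicit Defensive.
Import Order.TTheory GRing.Theory Num.Theory.
Local Open Scope classical_set_scope.
Local Open Scope ring_scope.

(* The carrier R equipped with the Lebesgue (completed) sigma-algebra. *)
Definition lebR (R : realType) :=
  caratheodory_type (R:=R)
    (T:=lebesgue_stieltjes_measure_ocitv_type__canonical__measurable_structure_SemiRingOfSets R)
    (wlength idfun)^*%mu.

Definition lmeasurable (R : realType) (A : set R) : Prop :=
  measurable (A : set (lebR R)).
Definition mu (R : realType) (A : set R) : \bar R :=
  @completed_lebesgue_measure R (A : set (lebR R)).

Definition simple_graph (T : finType) (e : rel T) : Prop :=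
  symmetric e /\ irreflexive e.

Definition demand (T : finType) (f : T -> rat) : Prop :=
  forall v, 0 <= f v <= 1.

Definition frac_list_assignment (R : realType) (T : finType) (L : T -> set R) : Prop :=
  forall v, lmeasurable (L v) /\ L v `<=` `[0, 1].

(* phi is a fractional coloring of the induced subgraph G[S]
   (phi is only relevant on the vertices of S). *)
Definition frac_coloring_on (R : realType) (T : finType) (e : rel T) (S : {set T})
    (phi : T -> set R) : Prop :=
  (forall v, v \in S -> lmeasurable (phi v) /\ phi v `<=` `[0, 1]) /\
  (forall u v, u \in S -> v \in S -> e u v -> phi u `&` phi v = set0).

Definition f_coloring_on (R : realType) (T : finType) (e : rel T) (S : {set T})
    (f : T -> rat) (phi : T -> set R) : Prop :=
  frac_coloring_on e S phi /\
  (forall v, v \in S -> ((ratr (f v) : R)%:E <= mu (phi v))%E).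

Definition gL_coloring (R : realType) (T : finType) (e : rel T)
    (g : T -> rat) (L : T -> set R) (phi : T -> set R) : Prop :=
  f_coloring_on e [set: T] g phi /\ (forall v, phi v `<=` L v).

Definition unit01 (R : realType) : set R := `[0, 1].

(* Main.v *)
Require Import Defs.
From mathcomp Require Import all_boot all_order all_algebra.
From mathcomp Require Import all_classical all_reals all_analysis.
From mathcomp Require Import lra.
Set Implicit Arguments. Unset Strict Implicit. Unset Printing Implicit Defensive.
Import Order.TTheory GRing.Theory Num.Theory numFieldNormedType.Exports.
Local Open Scope classical_set_scope.
Local Open Scope ring_scope.

Lemma in_bigsetU (X : Type) (I : eqType) (r : seq I) (P : pred I) (F : I -> set X) x :
  (\big[setU/set0]_(i <- r | P i) F i) x <-> exists2 i, (i \in r) && P i & F i x.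
Proof.
elim: r => [|a r IH]; first by rewrite big_nil; split => // -[].
rewrite big_cons; case: ifPn => Pa.
- split.
  + case=> [Fa|/IH[i /andP[ir Pi] Fi]]; first by exists a; rewrite ?inE ?eqxx ?Pa.
    by exists i => //; rewrite inE ir orbT.
  + case=> i /andP[]; rewrite inE => /orP[/eqP->|ir] Pi Fi; first by left.
    by right; apply/IH; exists i; rewrite ?ir ?Pi.
- rewrite IH; split; case=> i /andP[ir Pi] Fi.
  + by exists i; rewrite ?inE ?ir ?orbT ?Pi.
  + move: ir; rewrite inE => /orP[/eqP ia|ir]; first by move: Pa; rewrite -ia Pi.
    by exists i; rewrite ?ir ?Pi.
Qed.

Lemma lmeas_bigsetU (R : realType) (I : Type) (r : seq I) (P : pred I) (F : I -> set R) :
  (forall i, P i -> lmeasurable (F i)) -> lmeasurable (\big[setU/set0]_(i <- r | P i) F i).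
Proof. move=> mF; apply: (big_ind (fun X : set R => lmeasurable X)) => //.
- exact: measurable0.
- by move=> X Y; exact: measurableU.
Qed.

Lemma lmeasI (R : realType) (A B : set R) : lmeasurable A -> lmeasurable B -> lmeasurable (A `&` B).
Proof. exact: measurableI. Qed.
Lemma lmeasD (R : realType) (A B : set R) : lmeasurable A -> lmeasurable B -> lmeasurable (A `\` B).
Proof. exact: measurableD. Qed.
Lemma lmeasC (R : realType) (A : set R) : lmeasurable A -> lmeasurable (~` A).
Proof. exact: measurableC. Qed.
Lemma lmeas0 (R : realType) : lmeasurable (@set0 R).
Proof. exact: measurable0. Qed.
Lemma lmeasT (R : realType) : lmeasurable (@setT R).
Proof. exact: measurableT. Qed.

Lemma mu_bigsetU (R : realType) (I : eqType) (r : seq I) (P : pred I) (F : I -> set R) :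
  uniq r -> (forall i, P i -> lmeasurable (F i)) ->
  (forall i j, P i -> P j -> i != j -> F i `&` F j = set0) ->
  mu (\big[setU/set0]_(i <- r | P i) F i) = (\sum_(i <- r | P i) mu (F i))%E.
Proof.
move=> + mF dF; elim: r => [|a r IH]; first by rewrite !big_nil /mu measure0.
rewrite /= => /andP[ar ur]; rewrite !big_cons; case: ifPn => Pa; last exact: IH.
rewrite /mu measureU; first by rewrite -IH.
- exact: mF.
- exact: lmeas_bigsetU.
- apply/seteqP; split => // x [Fa /in_bigsetU[i /andP[ir Pi] Fi]].
  have ai : a != i by apply: contraNneq ar => ->.
  by rewrite -(dF a i Pa Pi ai); split.
Qed.

Lemma lmeas_forall (R : realType) (T : finType) (Q : T -> set R) :
  (forall v, lmeasurable (Q v)) -> lmeasurable [set x | forall v, Q v x].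
Proof.
move=> mQ.
have -> : [set x | forall v, Q v x] = \big[setI/setT]_(v <- enum T) Q v.
  apply/seteqP; split => x.
  - move=> /= H; elim: (enum T) => [|a r IH]; first by rewrite big_nil.
    by rewrite big_cons; split.
  - move=> H v; have : v \in enum T by rewrite mem_enum.
    elim: (enum T) H => [|a r IH]; first by [].
    rewrite big_cons inE => -[Qa Hr] /orP[/eqP->//|vr]; exact: IH.
apply: (big_ind (fun X : set R => lmeasurable X)) => //.
- exact: measurableT.
- by move=> X Y; exact: measurableI.
Qed.
Section Atoms.
Variables (R : realType) (T : finType) (U : set R) (X : T -> set R).
Definition sX (x : R) : {set T} := [set v | `[< X v x >]].
Definition atom (P : {set T}) := U `&` [set x | forall v, X v x <-> v \in P].

Lemma atomE P x : atom P x <-> U x /\ sX x = P.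
Proof.
split.
- case=> Ux H; split => //; apply/setP => v; rewrite inE.
  apply/asboolP/idP; by move/H.
- case=> Ux <-; split => // v; rewrite inE; split; [by move/asboolP | by move/asboolP].
Qed.

Lemma atom_meas : lmeasurable U -> (forall v, lmeasurable (X v)) ->
  forall P, lmeasurable (atom P).
Proof.
move=> mU mX P; apply: lmeasI => //.
have -> : [set x | forall v, X v x <-> v \in P] =
    [set x | forall v, (if v \in P then X v else ~` X v) x].
  apply/seteqP; split => x /= H v; have := H v; case: (v \in P).
  - by case=> _; apply.
  - by case=> H1 _ Xv; have := H1 Xv.
  - by move=> Xv; split.
  - by move=> nX; split => // Xv; case: (nX Xv).
apply: lmeas_forall => v; case: (v \in P) => //; exact: lmeasC.
Qed.

Lemma atom_sub P : atom P `<=` U.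
Proof. by move=> x []. Qed.

Lemma atom_in (P : {set T}) v : v \in P -> atom P `<=` X v.
Proof. by move=> vP x [_ H]; apply/H. Qed.

Lemma atom_disj P Q : P != Q -> atom P `&` atom Q = set0.
Proof.
move=> PQ; apply/seteqP; split => // x [/atomE[_ eP] /atomE[_ eQ]].
by move: PQ; rewrite -eP -eQ eqxx.
Qed.

Lemma atom_sum (Q : pred {set T}) : lmeasurable U -> (forall v, lmeasurable (X v)) ->
  mu (U `&` [set x | Q (sX x)]) = (\sum_(P | Q P) mu (atom P))%E.
Proof.
move=> mU mX.
have -> : U `&` [set x | Q (sX x)] = \big[setU/set0]_(P | Q P) atom P.
  apply/seteqP; split => x.
  - case=> Ux Qx; apply/in_bigsetU; exists (sX x); first by rewrite mem_index_enum.
    exact/atomE.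
  - move/in_bigsetU => [P /andP[_ QP] /atomE[Ux eP]]; split => //.
    by rewrite /= eP.
apply: mu_bigsetU.
- exact: index_enum_uniq.
- by move=> P _; exact: atom_meas.
- by move=> P P' _ _; exact: atom_disj.
Qed.

End Atoms.

Lemma lip_cont (R : realType) (F : R -> R) : (forall s t, `|F t - F s| <= `|t - s|) -> continuous F.
Proof.
move=> H x; apply/cvgrPdist_le => eps eps0.
exists eps => //= y.
rewrite /ball_ => xy; rewrite (le_trans (H y x))// ltW// distrC. Qed.


Lemma mu_ge0 (R : realType) (A : set R) : (0 <= mu A)%E.
Proof. exact: measure_ge0. Qed.

Lemma mu_le (R : realType) (A B : set R) : lmeasurable A -> lmeasurable B -> A `<=` B ->
  (mu A <= mu B)%E.
Proof. by move=> mA mB AB; rewrite /mu le_measure ?inE. Qed.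

Lemma mu_U2 (R : realType) (A B : set R) : lmeasurable A -> lmeasurable B ->
  A `&` B = set0 -> mu (A `|` B) = (mu A + mu B)%E.
Proof. move=> mA mB AB. rewrite /mu. by rewrite measureU. Qed.

Lemma lmeas_itv (R : realType) (i : interval R) : lmeasurable [set` i].
Proof.
rewrite /lmeasurable.
have h : measurable ([set` i] : set (measurableTypeR R)) by exact: measurable_itv.
exact: sub_caratheodory.
Qed.

Lemma mu_oc (R : realType) (a b : R) : a <= b -> mu `]a, b] = (b - a)%:E.
Proof.
move=> ab; rewrite /mu; change (lebesgue_measure `]a, b] = (b - a)%:E)%E.
by rewrite lebesgue_measure_itv/= lte_fin; case: ltgtP ab => // ->; rewrite subrr.
Qed.

Lemma mu_cc (R : realType) (a b : R) : a <= b -> mu `[a, b] = (b - a)%:E.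
Proof.
move=> ab; rewrite /mu; change (lebesgue_measure `[a, b] = (b - a)%:E)%E.
by rewrite lebesgue_measure_itv/= lte_fin; case: ltgtP ab => // ->; rewrite subrr.
Qed.

Lemma mu01 (R : realType) : mu (`[0, 1] : set R) = 1%E.
Proof. by rewrite mu_cc ?ler01 // subr0. Qed.

Lemma mu_fin01 (R : realType) (A : set R) : lmeasurable A -> A `<=` `[0, 1] ->
  mu A \is a fin_num.
Proof.
move=> mA A01; rewrite ge0_fin_numE ?mu_ge0 //.
apply: (le_lt_trans (mu_le mA (lmeas_itv _) A01)); by rewrite mu01 ltry.
Qed.

Lemma carve1 (R : realType) (A : set R) (c : \bar R) :
  lmeasurable A -> A `<=` `[0, 1] -> (0 <= c)%E -> (c <= mu A)%E ->
  exists B, [/\ B `<=` A, lmeasurable B & mu B = c].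
Proof.
move=> mA A01 c0 cA.
pose G t := A `&` `]-oo, t].
have mG t : lmeasurable (G t) by apply: lmeasI => //; exact: lmeas_itv.
have G01 t : G t `<=` `[0, 1] by move=> x [Ax _]; exact: A01.
pose F t := fine (mu (G t)).
have FE t : (F t)%:E = mu (G t) by rewrite fineK // mu_fin01.
have Fmon s t : s <= t -> F t - F s <= t - s /\ F s <= F t.
  move=> st.
  have eG : G t = G s `|` (A `&` `]s, t]).
    apply/seteqP; split => x /=.
    - rewrite /G /= !in_itv /= => -[Ax xt]; case: (leP x s) => xs.
      + by left.
      + by right; split => //; rewrite xs xt.
    - rewrite /G /= !in_itv /= => -[[Ax xs]|[Ax /andP[sx xt]]]; split => //.
      exact: le_trans xs st.
  have mD : lmeasurable (A `&` `]s, t]) by apply: lmeasI => //; exact: lmeas_itv.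
  have dj : G s `&` (A `&` `]s, t]) = set0.
    apply/seteqP; split => // x /=; rewrite /G /= !in_itv /= => -[[_ xs] [_ /andP[sx _]]].
    by move: (lt_le_trans sx xs); rewrite ltxx.
  have := mu_U2 (mG s) mD dj; rewrite -eG -!FE.
  have fD : mu (A `&` `]s, t]) \is a fin_num.
    by apply: mu_fin01 => // x [Ax _]; exact: A01.
  rewrite -(fineK fD) -EFinD => -[->]; split.
  - rewrite addrC addKr; rewrite -lee_fin fineK //.
    rewrite -mu_oc //; apply: mu_le => //; first exact: lmeas_itv.
  - by rewrite lerDl fine_ge0 // mu_ge0.
have Flip s t : `|F t - F s| <= `|t - s|.
  wlog st : s t / s <= t.
    move=> W; case: (leP s t) => st; first exact: W.
    by rewrite distrC [`|t - s|]distrC; apply: W; exact: ltW.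
  have [h1 h2] := Fmon s t st.
  by rewrite !ger0_norm ?subr_ge0.
have cF := lip_cont Flip.
have Fm1 : F (-1) = 0.
  rewrite /F /G.
  have -> : A `&` `]-oo, -1] = set0.
    apply/seteqP; split => // x [/A01]; rewrite /= !in_itv /= => /andP[x0 _] xm1.
    by move: (le_trans x0 xm1); lra.
  by rewrite /mu measure0.
have F1 : (F 1)%:E = mu A.
  rewrite FE /G; congr mu; apply/seteqP; split => x; first by case.
  by move=> Ax; split => //; have := A01 _ Ax; rewrite /= !in_itv /= => /andP[].
have cfin : c \is a fin_num by rewrite ge0_fin_numE // (le_lt_trans cA) // -ge0_fin_numE ?mu_ge0 // mu_fin01.
have [t _ Ft] : exists2 t, t \in `[-1, 1] & F t = fine c.
  apply: IVT.
  - lra.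
  - exact: continuous_subspaceT.
  - rewrite Fm1; apply/andP; split.
    + by rewrite ge_min; apply/orP; left; rewrite fine_ge0.
    + rewrite le_max; apply/orP; right; rewrite -lee_fin F1 fineK //.
exists (G t); split => //; first by move=> x [].
by rewrite -FE Ft fineK.
Qed.

Lemma mu_D (R : realType) (A B : set R) : lmeasurable A -> lmeasurable B -> B `<=` A ->
  mu A \is a fin_num -> mu (A `\` B) = (mu A - mu B)%E.
Proof.
move=> mA mB BA fA; rewrite /mu measureD //; last by rewrite -ge0_fin_numE ?mu_ge0.
by rewrite setIidr.
Qed.

Lemma carve (R : realType) (I : eqType) (s : seq I) (A : set R) (c : I -> \bar R) :
  lmeasurable A -> A `<=` `[0, 1] -> (forall i, (0 <= c i)%E) ->
  (\sum_(i <- s) c i <= mu A)%E ->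
  exists B : I -> set R,
    (forall i, [/\ B i `<=` A, lmeasurable (B i) & (i \in s -> mu (B i) = c i)]) /\
    (forall i j, i != j -> B i `&` B j = set0).
Proof.
elim: s A => [|a s IH] A mA A01 c0 hs.
- exists (fun _ => set0); split; last by move=> i j _; rewrite set0I.
  by move=> i; split => //; exact: lmeas0.
- rewrite big_cons in hs.
  have sge : (0 <= \sum_(i <- s) c i)%E by rewrite sume_ge0.
  have caA : (c a <= mu A)%E by apply: le_trans hs; exact: leeDl.
  have [B0 [B0A mB0 muB0]] := carve1 mA A01 (c0 a) caA.
  have mA' : lmeasurable (A `\` B0) by apply: lmeasD.
  have A'01 : A `\` B0 `<=` `[0,1] by move=> x [/A01].
  have cfin : c a \is a fin_num by rewrite -muB0; apply: mu_fin01 => // x /B0A /A01.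
  have hs' : (\sum_(i <- s) c i <= mu (A `\` B0))%E.
    rewrite mu_D // ?mu_fin01 // muB0 leeBrDl //.
  have [B' [HB' dB']] := IH _ mA' A'01 c0 hs'.
  exists (fun i => if i == a then B0 else B' i); split.
  + move=> i; case: eqP => [->|ia]; first by split => // _.
    have [h1 h2 h3] := HB' i; split => //.
    * by move=> x /h1 [].
    * by rewrite inE => /orP[/eqP//|]; exact: h3.
  + move=> i j ij; case: eqP => ia; case: eqP => ja.
    * by move: ij; rewrite ia ja eqxx.
    * apply/seteqP; split => // x [B0x].
      by have [h1 _ _] := HB' j => /h1 [].
    * apply/seteqP; split => // x [+ B0x].
      by have [h1 _ _] := HB' i => /h1 [].
    * exact: dB'.
Qed.

Lemma mu_mono (R : realType) (A B : set R) : A `<=` B -> (mu A <= mu B)%E.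
Proof. move=> AB; rewrite /mu. exact: le_outer_measure. Qed.

Unset Implicit Arguments. Set Strict Implicit. Set Printing Implicit Defensive.

Theorem lemma2p7 (R : realType) (T : finType) (e : rel T)
    (f g : T -> rat) (L : T -> set R) :
  simple_graph e -> demand f -> demand g -> frac_list_assignment L ->
  (forall v, ((ratr (g v) : R)%:E <= (ratr (f v) : R)%:E * mu (L v))%E) ->
  (forall S : {set T},
      (0%E < mu (@unit01 R `&` \bigcap_(v in [set v | v \in S]) L v))%E ->
      exists phi : T -> set R, f_coloring_on e S f phi) ->
  exists phi : T -> set R, gL_coloring e g L phi.
Proof.
move=> _ _ _ hL hfg hS.
pose U : set R := `[0%R, 1%R]%classic.
have mU : lmeasurable U := lmeas_itv _.
have mL v : lmeasurable (L v) := (hL v).1.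
have L01 v : L v `<=` U := (hL v).2.
pose A := atom U L.
pose a S := mu (A S).
have mA S : lmeasurable (A S) := atom_meas mU mL S.
have A01 S : A S `<=` U := @atom_sub _ _ U L S.
have a0 S : (0 <= a S)%E := mu_ge0 _.
have [Phi HPhi] : {Phi : {set T} -> T -> set R &
    forall S, (0 < a S)%E -> f_coloring_on e S f (Phi S)}.
  apply: (choice (P := fun S phi => (0 < a S)%E -> f_coloring_on e S f phi)) => S.
  case: (ltP 0%E (a S)) => aS.
  - have [phi Hphi] : exists phi : T -> set R, f_coloring_on e S f phi.
      apply: hS; apply: (lt_le_trans aS); apply: mu_mono.
      move=> x [Ux H]; split => // v /= vS; exact/H.
    by exists phi.
  - by exists (fun _ => set0).
pose Phi' (S : {set T}) (v : T) : set R := if (v \in S) && (0 < a S)%E then Phi S v else set0.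
have mPhi' S v : lmeasurable (Phi' S v).
  rewrite /Phi'; case: ifP => [/andP[vS aS]|_]; last exact: lmeas0.
  by have [[h1 _] _] := HPhi S aS; have [] := h1 v vS.
pose W S := atom U (Phi' S).
pose w S I := mu (W S I).
have mW S I : lmeasurable (W S I) := atom_meas mU (mPhi' S) I.
have w0 S I : (0 <= w S I)%E := mu_ge0 _.
have c0 S I : (0 <= w S I * a S)%E by rewrite mule_ge0.
have sumw S : (\sum_(I : {set T}) w S I = 1)%E.
  have := atom_sum predT mU (mPhi' S).
  have -> : U `&` [set x | predT (sX (Phi' S) x)] = U.
    by apply/seteqP; split => x //; case.
  by rewrite mu01 => <-.
have [B HB] : {B : {set T} -> {set T} -> set R & forall S,
    (forall I, [/\ B S I `<=` A S, lmeasurable (B S I) & mu (B S I) = (w S I * a S)%E]) /\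
    (forall I J, I != J -> B S I `&` B S J = set0)}.
  apply: (choice (P := fun S BS => (forall I, [/\ BS I `<=` A S, lmeasurable (BS I) &
     mu (BS I) = (w S I * a S)%E]) /\
    (forall I J, I != J -> BS I `&` BS J = set0))) => S.
  have [|BS [h1 h2]] := @carve R _ (index_enum {set T}) (A S) (fun I => w S I * a S)%E
     (mA S) (A01 S) (c0 S).
    rewrite -ge0_sume_distrl //.
    by rewrite sumw mul1e.
  exists BS; split => // I; have [k1 k2 k3] := h1 I; split => //; apply: k3; exact: mem_index_enum.
pose C (S I : {set T}) : set R :=
  if (0 < a S)%E && (0 < w S I)%E then B S I else set0.
have mC S I : lmeasurable (C S I).
  rewrite /C; case: ifP => _; last exact: lmeas0.
  by have [_ h _] := (HB S).1 I.
have CA S I : C S I `<=` A S.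
  rewrite /C; case: ifP => _ // x.
  by have [h _ _] := (HB S).1 I; apply: h.
have Cdisj (p q : {set T} * {set T}) : p != q -> C p.1 p.2 `&` C q.1 q.2 = set0.
  case: p q => [S I] [S' I'] /= pq.
  case: (eqVneq S S') => [eS|nS].
  - subst S'; have nI : I != I' by apply: contraNneq pq => ->.
    apply/seteqP; split => // x [].
    rewrite /C; case: ifP => _ // h1; case: ifP => _ // h2.
    by have [_ d] := HB S; rewrite -(d I I' nI); split.
  - apply/seteqP; split => // x [/CA h1 /CA h2].
    by rewrite -(@atom_disj _ _ U L S S' nS); split.
have Cind S I x u v : C S I x -> u \in I -> v \in I -> ~~ e u v.
  rewrite /C; case: ifP => [/andP[aS wS] _ uI vI|_ //].
  have [y Wy] : exists y, W S I y.
    apply: contrapT => hne.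
    have W0 : W S I = set0 by apply/seteqP; split => // y Wy; apply: hne; exists y.
    by move: wS; rewrite /w W0 /mu measure0 ltxx.
  have [_ Hy] := Wy.
  have := proj2 (Hy u) uI; have := proj2 (Hy v) vI.
  rewrite /Phi' aS !andbT; case: ifP => // vS; case: ifP => // uS Pv Pu.
  apply/negP => euv.
  have [[_ h] _] := HPhi S aS.
  have : (@set0 R) y by rewrite -(h u v uS vS euv); split.
  by [].
pose psi (v : T) := \big[setU/set0]_(p : {set T} * {set T} | (v \in p.1) && (v \in p.2))
   C p.1 p.2.
exists psi; split; [split; [split|]|].
- move=> v _; split.
  + by apply: lmeas_bigsetU => p _.
  + by move=> x /in_bigsetU[p _ /CA /A01].
- move=> u v _ _ euv; apply/seteqP; split => // x.
  move=> [/in_bigsetU[p /andP[_ /andP[up1 up2]] Cp] /in_bigsetU[q /andP[_ /andP[vq1 vq2]] Cq]].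
  case: (eqVneq p q) => [pq|pq].
  + by subst q; have := Cind _ _ _ _ _ Cp up2 vq2; rewrite euv.
  + by rewrite -(Cdisj p q pq); split.
- move=> v _.
  have -> : mu (psi v) = (\sum_(S : {set T} | v \in S) \sum_(I : {set T} | v \in I) mu (C S I))%E.
    rewrite (pair_big_dep (fun S : {set T} => v \in S) (fun (_ : {set T}) (I : {set T}) => v \in I)
      (fun S I => mu (C S I))) /=.
    apply: mu_bigsetU; first exact: index_enum_uniq.
    - by move=> p _.
    - by move=> p q _ _; exact: Cdisj.
  apply: (le_trans (hfg v)).
  have -> : mu (L v) = (\sum_(S : {set T} | v \in S) a S)%E.
    rewrite -(atom_sum (fun S => v \in S) mU mL).
    congr mu; apply/seteqP; split => x.
    + move=> Lx; rewrite /setI /=; apply: conj; first exact: (L01 v x Lx).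
      by rewrite /sX inE; apply/asboolP.
    + by case=> _ /=; rewrite /sX inE => /asboolP.
  rewrite ge0_sume_distrr //; apply: lee_sum => S vS.
  case: (ltP 0%E (a S)) => aS; last first.
    have -> : a S = 0%E by apply/eqP; rewrite eq_le aS a0.
    by rewrite mule0 sume_ge0.
  have -> : (\sum_(I : {set T} | v \in I) mu (C S I) = \sum_(I : {set T} | v \in I) (w S I * a S))%E.
    apply: eq_bigr => I _; rewrite /C aS /=.
    case: ltP => wI; first by have [_ _ ->] := (HB S).1 I.
    have -> : w S I = 0%E by apply/eqP; rewrite eq_le wI w0.
    by rewrite mul0e /mu measure0.
  rewrite -ge0_sume_distrl // muleC [X in (_ <= X)%E]muleC.
  apply: lee_wpmul2l => //.
  have [[h1 _] h2] := HPhi S aS.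
  apply: (le_trans (h2 v vS)).
  rewrite -(atom_sum (fun I => v \in I) mU (mPhi' S)).
  apply: mu_mono => x Px; split; first by have [_ ] := h1 v vS; apply.
  rewrite /sX /= inE; apply/asboolP; by rewrite /Phi' vS aS.
- move=> v x /in_bigsetU[p /andP[_ /andP[vp1 _]] /CA].
  exact: atom_in.
Qed.
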